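(* For all integers $r\ge 0$: \begin{align*} \mathrm{LCD}[6r+3,2] &= 4r+2,\\ \mathrm{LCD}[6r+4,2] &= 4r+2,\\ \mathrm{LCD}[6r+5,2] &= 4r+2,\\ \mathrm{LCD}[6r+6,2] &= 4r+3,\\ \mathrm{LCD}[6r+7,2] &= 4r+4,\\ \mathrm{LCD}[6r+8,2] &= 4r+5. \end{align*} Equivalently, for all integers $r\ge 0$ and $s\in\{3,4,5,6,7,8\}$, \[\mathrm{LCD}[6r+s,2]=4r+\left\lfloor\frac{s}{6}\right\rfloor\bigl(1+(s \bmod 6)\bigr)+2.\]
   Context: All codes are binary linear codes, i.e. subspaces of $\mathbb{F}_2^n$; an $[n,k,d]$ code is one of length $n$, dimension $k$ and minimum Hamming distance $d$. A linear code $C$ is an LCD code (linear code with complementary dual) if $C\cap C^\perp=\{0\}$, where $C^\perp$ is the dual with respect to the standard dot product. For positive integers $n\ge k$, $\mathrm{LCD}[n,k]$ denotes the largest $d$ such that there exists a binary $[n,k,d]$ LCD code. *)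

(* Defs.v *)
From mathcomp Require Import all_boot all_algebra.
Set Implicit Arguments. Unset Strict Implicit. Unset Printing Implicit Defensive.
Import GRing.Theory.
Local Open Scope ring_scope.

(* A binary linear code of length n is a subspace of F_2^n, represented as the
   row space of a matrix C : 'M['F_2]_n (mxalgebra's representation of subspaces). *)

Definition wt n (v : 'rV['F_2]_n) : nat := #|[set i : 'I_n | v 0 i != 0]|.

Definition hdist n (u v : 'rV['F_2]_n) : nat := #|[set i : 'I_n | u 0 i != v 0 i]|.

Definition dual_code n (C : 'M['F_2]_n) : 'M['F_2]_n := kermx C^T.

Definition is_LCD n (C : 'M['F_2]_n) : bool := \rank (C :&: dual_code C)%MS == 0%N.

Definition has_min_dist n (C : 'M['F_2]_n) (d : nat) : Prop :=
  (exists u v : 'rV['F_2]_n, [/\ (u <= C)%MS, (v <= C)%MS, u != v & hdist u v = d]) /\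
  (forall u v : 'rV['F_2]_n, (u <= C)%MS -> (v <= C)%MS -> u != v -> (d <= hdist u v)%N).

Definition LCD_exists (n k d : nat) : Prop :=
  exists C : 'M['F_2]_n, [/\ \rank C = k, is_LCD C & has_min_dist C d].

Definition LCD_value (n k d : nat) : Prop :=
  LCD_exists n k d /\ (forall d', LCD_exists n k d' -> (d' <= d)%N).

(* Main.v *)
Require Import Defs.
From mathcomp Require Import all_boot all_algebra zify.
Set Implicit Arguments. Unset Strict Implicit. Unset Printing Implicit Defensive.
Import GRing.Theory.
Local Open Scope ring_scope.


Lemma F2P (t : 'F_2) : t = 0 \/ t = 1.
Proof. move: t => [[|[|m]]] //= H; [left|right]; exact/val_inj. Qed.

Lemma F2odd m : (m%:R : 'F_2) = (odd m)%:R.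
Proof. by rewrite -modn2 Zp_nat_mod. Qed.

Lemma natmulE (a c : nat) : a *+ c = (a * c)%N.
Proof. by elim: c => [|c IH]; rewrite ?muln0 // mulrS IH mulnS. Qed.


Section S.
Variables (n : nat) (fa fb : 'I_n -> 'F_2).

Definition Mx : 'M['F_2]_(2,n) := \matrix_(i<2,k<n) if val i == 0%N then fa k else fb k.
Definition cnt (s t : 'F_2) : nat := #|[set k | (fa k == s) && (fb k == t)]|.

Lemma card_sum (P : pred 'I_n) : #|[set k | P k]| = \sum_k (P k : nat).
Proof. by rewrite -sum1dep_card big_mkcond /=; apply: eq_bigr => k _; case: (P k). Qed.

Lemma decomp (V : nmodType) (G : 'F_2 -> 'F_2 -> V) :
  \sum_k G (fa k) (fb k) =
  G 1 0 *+ cnt 1 0 + G 0 1 *+ cnt 0 1 + G 1 1 *+ cnt 1 1 + G 0 0 *+ cnt 0 0.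
Proof.
rewrite /cnt !card_sum -!sumrMnr -!big_split /=; apply: eq_bigr => k _.
by case: (F2P (fa k)) => ->; case: (F2P (fb k)) => ->;
  rewrite /= ?mulr1n ?mulr0n ?addr0 ?add0r.
Qed.

Definition i0 : 'I_2 := ord0.
Definition i1 : 'I_2 := lift ord0 (ord0 : 'I_1).
Definition ev (p : 'rV['F_2]_2) (s t : 'F_2) := p 0 i0 * s + p 0 i1 * t.

Lemma ev00 p : ev p 0 0 = 0.
Proof. by rewrite /ev !mulr0 addr0. Qed.

Lemma MxE p k : (p *m Mx) 0 k = ev p (fa k) (fb k).
Proof.
rewrite !mxE big_ord_recl big_ord1 !mxE.
by [].
Qed.

Lemma hdistE p q : hdist (p *m Mx) (q *m Mx) =
  ((ev p 1%R 0%R != ev q 1%R 0%R) * cnt 1%R 0%R + (ev p 0%R 1%R != ev q 0%R 1%R) * cnt 0%R 1%R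
   + (ev p 1%R 1%R != ev q 1%R 1%R) * cnt 1%R 1%R)%N.
Proof.
rewrite /hdist card_sum.
under eq_bigr do rewrite !MxE.
rewrite (decomp (fun s t => (ev p s t != ev q s t : nat))).
rewrite !ev00 eqxx mul0rn !natmulE !natrE addn0.
done.
Qed.

Lemma gramE p j : (p *m Mx *m Mx^T) 0 j =
  \sum_k ev p (fa k) (fb k) * (if val j == 0%N then fa k else fb k).
Proof. rewrite mxE; apply: eq_bigr => k _; rewrite MxE !mxE; done. Qed.

Lemma gram0 p : (p *m Mx *m Mx^T) 0 i0 =
  ev p 1 0 * (odd (cnt 1 0))%:R + ev p 1 1 * (odd (cnt 1 1))%:R.
Proof.
rewrite gramE /= (decomp (fun s t => ev p s t * s)).
rewrite (mulr1 (ev p 1 0)) (mulr1 (ev p 1 1)) (mulr0 (ev p 0 1)) (mulr0 (ev p 0 0)).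
rewrite (mul0rn _ (cnt 0 1)) (mul0rn _ (cnt 0 0)) (addr0 (ev p 1 0 *+ cnt 1 0)).
rewrite (addr0 (ev p 1 0 *+ cnt 1 0 + ev p 1 1 *+ cnt 1 1)).
by rewrite -(mulr_natr (ev p 1 0)) -(mulr_natr (ev p 1 1)) (F2odd (cnt 1 0)) (F2odd (cnt 1 1)).
Qed.

Lemma gram1 p : (p *m Mx *m Mx^T) 0 i1 =
  ev p 0 1 * (odd (cnt 0 1))%:R + ev p 1 1 * (odd (cnt 1 1))%:R.
Proof.
rewrite gramE /= (decomp (fun s t => ev p s t * t)).
rewrite (mulr1 (ev p 0 1)) (mulr1 (ev p 1 1)) (mulr0 (ev p 1 0)) (mulr0 (ev p 0 0)).
rewrite (mul0rn _ (cnt 1 0)) (mul0rn _ (cnt 0 0)) (add0r (ev p 0 1 *+ cnt 0 1)).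
rewrite (addr0 (ev p 0 1 *+ cnt 0 1 + ev p 1 1 *+ cnt 1 1)).
by rewrite -(mulr_natr (ev p 0 1)) -(mulr_natr (ev p 1 1)) (F2odd (cnt 0 1)) (F2odd (cnt 1 1)).
Qed.

Lemma cnt_sum : (cnt 1%R 0%R + cnt 0%R 1%R + cnt 1%R 1%R + cnt 0%R 0%R = n)%N.
Proof.
have := decomp (fun _ _ => 1%N); rewrite sum1_card card_ord !natrE => <-.
done.
Qed.

End S.

Definition mkr (a b : 'F_2) : 'rV['F_2]_2 := \row_j (if val j == 0%N then a else b).

Lemma mkr0 a b : mkr a b 0 i0 = a. Proof. by rewrite mxE. Qed.
Lemma mkr1 a b : mkr a b 0 i1 = b. Proof. by rewrite mxE. Qed.

Lemma ord2P (j : 'I_2) : j = i0 \/ j = i1.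
Proof. move: j => [[|[|m]]] //= H; [left|right]; exact/val_inj. Qed.

Lemma rV2E (p : 'rV['F_2]_2) : p = mkr (p 0 i0) (p 0 i1).
Proof. by apply/rowP => j; case: (ord2P j) => ->; rewrite mxE. Qed.

Lemma mkr_inj a b a' b' : mkr a b = mkr a' b' -> a = a' /\ b = b'.
Proof.
move=> E; split.
  by rewrite -(mkr0 a b) -(mkr0 a' b') E.
by rewrite -(mkr1 a b) -(mkr1 a' b') E.
Qed.

Lemma evE a b s t : ev (mkr a b) s t = a * s + b * t.
Proof. by rewrite /ev mkr0 mkr1. Qed.

Lemma F2_11 : (1 + 1 : 'F_2) = 0. Proof. by apply/eqP. Qed.

Definition two_odd (x y z : nat) := [|| odd x && odd y, odd x && odd z | odd y && odd z].

Section T.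
Variables (n : nat) (fa fb : 'I_n -> 'F_2).
Local Notation x := (cnt fa fb 1 0).
Local Notation y := (cnt fa fb 0 1).
Local Notation z := (cnt fa fb 1 1).
Local Notation M := (Mx fa fb).

Lemma hdist_mkr a b a' b' : hdist (mkr a b *m M) (mkr a' b' *m M) =
  ((a != a') * x + (b != b') * y + ((a + b)%R != (a' + b')%R) * z)%N.
Proof.
rewrite hdistE !evE.
by rewrite !mulr1 !mulr0 !addr0 !add0r.
Qed.

Lemma hdist_ge p q : p != q ->
  (minn (x + z) (minn (y + z) (x + y)) <= hdist (p *m M) (q *m M))%N.
Proof.
rewrite (rV2E p) (rV2E q) hdist_mkr.
case: (F2P (p 0 i0)) => ->; case: (F2P (p 0 i1)) => ->;
case: (F2P (q 0 i0)) => ->; case: (F2P (q 0 i1)) => ->;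
rewrite ?eqxx // ?addr0 ?add0r ?F2_11 ?oner_eq0 ?(eq_sym 0 1) ?oner_eq0 /= => _; lia.
Qed.


Lemma gram_zero (p : 'rV['F_2]_2) :
  ev p 1 0 * (odd x)%:R + ev p 1 1 * (odd z)%:R = 0 ->
  ev p 0 1 * (odd y)%:R + ev p 1 1 * (odd z)%:R = 0 -> p *m M *m M^T = 0.
Proof.
move=> h0 h1; apply/rowP => j; rewrite [RHS]mxE.
by case: (ord2P j) => ->; [rewrite gram0 | rewrite gram1].
Qed.

Lemma gram_zero_inv (p : 'rV['F_2]_2) : p *m M *m M^T = 0 ->
  ev p 1 0 * (odd x)%:R + ev p 1 1 * (odd z)%:R = 0 /\
  ev p 0 1 * (odd y)%:R + ev p 1 1 * (odd z)%:R = 0.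
Proof. by move=> E; rewrite -gram0 -gram1 E !mxE. Qed.

Lemma code_ne (p q : 'rV['F_2]_2) : row_free M -> p != q -> p *m M != q *m M.
Proof.
move=> fr; apply: contra => /eqP E.
by rewrite -subr_eq0 -(mulmx_free_eq0 (p - q) fr) mulmxBl E subrr.
Qed.

End T.

Lemma mkr_neq a b a' b' : (a != a') || (b != b') -> mkr a b != mkr a' b'.
Proof. by move=> h; apply/eqP => /mkr_inj [e1 e2]; move: h; rewrite e1 e2 !eqxx. Qed.

Lemma mkr00 : mkr 0 0 = 0.
Proof. by apply/rowP => j; rewrite !mxE; case: ifP. Qed.

Lemma hdist_refl n (u : 'rV['F_2]_n) : hdist u u = 0%N.
Proof. by rewrite /hdist; apply/eqP; rewrite cards_eq0; apply/eqP/setP => i; rewrite !inE eqxx. Qed.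

Lemma upper n (C : 'M['F_2]_n) d : \rank C = 2%N -> is_LCD C -> has_min_dist C d ->
  exists x y z w, [/\ (x + y + z + w = n)%N, two_odd x y z, (d <= x + z)%N,
                      (d <= y + z)%N & (d <= x + y)%N].
Proof.
move=> rC lcd [_ md].
have [B eqB frB] : exists2 B : 'M['F_2]_(2,n), (B :=: C)%MS & row_free B.
  by move: (row_base C) (eq_row_base C) (row_base_free C); rewrite rC => B eB fB; exists B.
pose fa k := B i0 k; pose fb k := B i1 k.
have BM : B = Mx fa fb by apply/matrixP => i k; rewrite mxE; case: (ord2P i) => ->.
rewrite BM in eqB frB.
exists (cnt fa fb 1 0), (cnt fa fb 0 1), (cnt fa fb 1 1), (cnt fa fb 0 0).
have inC p : (p *m Mx fa fb <= C)%MS by rewrite -eqB submxMl.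
have mdp p q : p != q -> (d <= hdist (p *m Mx fa fb) (q *m Mx fa fb))%N.
  by move=> pq; apply: md; rewrite ?inC ?code_ne.
have n1 : mkr 1 0 != mkr 0 0 by apply: mkr_neq.
have n2 : mkr 0 1 != mkr 0 0 by apply: mkr_neq.
have n3 : mkr 1 0 != mkr 0 1 by apply: mkr_neq.
have h1 := mdp _ _ n1.
have h2 := mdp _ _ n2.
have h3 := mdp _ _ n3.
rewrite !hdist_mkr ?addr0 ?add0r ?F2_11 ?eqxx ?oner_eq0 ?(eq_sym 0 1) ?oner_eq0 /= in h1 h2 h3.
split; try lia.
- exact: cnt_sum.
apply/negPn/negP => nt.
have key (p : 'rV['F_2]_2) : p != 0 -> p *m Mx fa fb *m (Mx fa fb)^T = 0 -> False.
  move=> p0 g.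
  have c0 : p *m Mx fa fb != 0 by have := code_ne frB p0; rewrite mul0mx.
  have [N CN] : exists N, C = N *m Mx fa fb by apply/submxP; rewrite eqB.
  have ker : (p *m Mx fa fb <= dual_code C)%MS.
    by rewrite /dual_code; apply/sub_kermxP; rewrite CN trmx_mul mulmxA g mul0mx.
  move: lcd; rewrite /is_LCD mxrank_eq0 => /eqP cap0.
  have : (p *m Mx fa fb <= C :&: dual_code C)%MS by rewrite sub_capmx inC ker.
  by rewrite cap0 submx0 (negbTE c0).
move: nt; rewrite /two_odd.
case ox: (odd (cnt fa fb 1 0)); case oy: (odd (cnt fa fb 0 1)); case oz: (odd (cnt fa fb 1 1)) => //= _.
- apply: (key (mkr 0 1)); first by rewrite -mkr00 mkr_neq.
  by apply: gram_zero; rewrite !evE ?ox ?oy ?oz; apply/eqP.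
- apply: (key (mkr 1 0)); first by rewrite -mkr00 mkr_neq.
  by apply: gram_zero; rewrite !evE ?ox ?oy ?oz; apply/eqP.
- apply: (key (mkr 1 1)); first by rewrite -mkr00 mkr_neq.
  by apply: gram_zero; rewrite !evE ?ox ?oy ?oz; apply/eqP.
- apply: (key (mkr 1 0)); first by rewrite -mkr00 mkr_neq.
  by apply: gram_zero; rewrite !evE ?ox ?oy ?oz; apply/eqP.
Qed.

Lemma natb_eq1 (b : bool) : ((b%:R : 'F_2) == 1) = b.
Proof. by case: b. Qed.
Lemma natb_eq0 (b : bool) : ((b%:R : 'F_2) == 0) = ~~ b.
Proof. by case: b. Qed.

Lemma sum_range N m1 m2 : (m1 <= m2)%N ->
  \sum_(k < N) ((m1 <= k < m2)%N : nat) = (minn N m2 - minn N m1)%N.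
Proof.
move=> h; elim: N => [|N IH]; first by rewrite big_ord0 !min0n.
rewrite big_ord_recr /= IH natrE.
case: (leqP m1 N) => h1; case: (ltnP N m2) => h2 /=; lia.
Qed.

Lemma two_odd_pos x y z : two_odd x y z -> [/\ (0 < x + z)%N, (0 < y + z)%N & (0 < x + y)%N].
Proof.
rewrite /two_odd; case ox: (odd x); case oy: (odd y); case oz: (odd z) => //= _.
all: move: (modn2 x) (modn2 y) (modn2 z); rewrite ?ox ?oy ?oz /=.
all: move=> *; split; lia.
Qed.

Lemma exist_code x y z w : two_odd x y z ->
  LCD_exists (x + y + z + w) 2 (minn (x + z) (minn (y + z) (x + y))).
Proof.
move=> t2; set n := (x + y + z + w)%N.
pose fa (k : 'I_n) : 'F_2 := ((k < z + x)%N)%:R.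
pose fb (k : 'I_n) : 'F_2 := ((k < z)%N || (z + x <= k < z + x + y)%N)%:R.
have cx : cnt fa fb 1 0 = x.
  rewrite /cnt card_sum.
  rewrite (eq_bigr (fun k : 'I_n => ((z <= k < z + x)%N : nat))); last first.
    move=> k _; rewrite /fa /fb natb_eq1 natb_eq0.
    case: (ltnP k z) => h1; case: (ltnP k (z + x)) => h2; case: (ltnP k (z + x + y)) => h3 /=; lia.
  rewrite sum_range ?leq_addr // /n; lia.
have cy : cnt fa fb 0 1 = y.
  rewrite /cnt card_sum.
  rewrite (eq_bigr (fun k : 'I_n => ((z + x <= k < z + x + y)%N : nat))); last first.
    move=> k _; rewrite /fa /fb natb_eq1 natb_eq0.
    case: (ltnP k z) => h1; case: (ltnP k (z + x)) => h2; case: (ltnP k (z + x + y)) => h3 /=; lia.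
  rewrite sum_range ?leq_addr // /n; lia.
have cz : cnt fa fb 1 1 = z.
  rewrite /cnt card_sum.
  rewrite (eq_bigr (fun k : 'I_n => ((0 <= k < z)%N : nat))); last first.
    move=> k _; rewrite /fa /fb !natb_eq1.
    case: (ltnP k z) => h1; case: (ltnP k (z + x)) => h2; case: (ltnP k (z + x + y)) => h3 /=; lia.
  rewrite sum_range // /n; lia.
have [pxz pyz pxy] := two_odd_pos t2.
have fr : row_free (Mx fa fb).
  rewrite -kermx_eq0; apply/eqP/row_matrixP => i; rewrite row0.
  have h : row i (kermx (Mx fa fb)) *m Mx fa fb = 0 by apply/sub_kermxP; exact: row_sub.
  apply/eqP; apply: contraT => rn.
  have := @hdist_ge n fa fb _ 0 rn.
  rewrite h mul0mx hdist_refl cx cy cz; lia.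
exists <<Mx fa fb>>%MS; split.
- by rewrite mxrank_gen; apply/eqP.
- { rewrite /is_LCD mxrank_eq0; apply/eqP/row_matrixP => i; rewrite row0.
  have := row_sub i (<<Mx fa fb>> :&: dual_code <<Mx fa fb>>)%MS.
  rewrite sub_capmx => /andP [cC cK].
  rewrite genmxE in cC; move/submxP: cC => [p cp].
  have [N MN] : exists N, Mx fa fb = N *m <<Mx fa fb>>%MS by apply/submxP; rewrite genmxE.
  have g : p *m Mx fa fb *m (Mx fa fb)^T = 0.
    move/sub_kermxP: cK => cK.
    have -> : (Mx fa fb)^T = (<<Mx fa fb>>%MS)^T *m N^T by rewrite {1}MN trmx_mul.
    by rewrite mulmxA -cp cK mul0mx.
  have [e0 e1] := gram_zero_inv g.
  rewrite cp; move: e0 e1 t2; have pE := rV2E p; move: (p 0 i0) (p 0 i1) pE => a b pE.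
  rewrite pE !evE cx cy cz /two_odd.
  case: (F2P a) => ->; case: (F2P b) => ->.
  + by rewrite mkr00 mul0mx.
  all: case: (odd x); case: (odd y); case: (odd z) => //=.
  all: by move=> /eqP h0 /eqP h1. }
- split.
  + have : minn (x + z) (minn (y + z) (x + y)) = (x + z)%N \/
           minn (x + z) (minn (y + z) (x + y)) = (y + z)%N \/
           minn (x + z) (minn (y + z) (x + y)) = (x + y)%N by lia.
    have n1 : mkr 1 0 != mkr 0 0 by apply: mkr_neq.
    have n2 : mkr 0 1 != mkr 0 0 by apply: mkr_neq.
    have n3 : mkr 1 0 != mkr 0 1 by apply: mkr_neq.
    case=> [->|[->|->]].
    * exists (mkr 1 0 *m Mx fa fb), (mkr 0 0 *m Mx fa fb); split; rewrite ?genmxE ?submxMl ?code_ne //.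
      rewrite hdist_mkr ?addr0 ?add0r ?F2_11 ?eqxx ?oner_eq0 ?(eq_sym 0 1) ?oner_eq0 /= cx cy cz; lia.
    * exists (mkr 0 1 *m Mx fa fb), (mkr 0 0 *m Mx fa fb); split; rewrite ?genmxE ?submxMl ?code_ne //.
      rewrite hdist_mkr ?addr0 ?add0r ?F2_11 ?eqxx ?oner_eq0 ?(eq_sym 0 1) ?oner_eq0 /= cx cy cz; lia.
    * exists (mkr 1 0 *m Mx fa fb), (mkr 0 1 *m Mx fa fb); split; rewrite ?genmxE ?submxMl ?code_ne //.
      rewrite hdist_mkr ?addr0 ?add0r ?F2_11 ?eqxx ?oner_eq0 ?(eq_sym 0 1) ?oner_eq0 /= cx cy cz; lia.
  + move=> u v; rewrite !genmxE => /submxP [p ->] /submxP [q ->] uv.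
    have pq : p != q by apply: contraNneq uv => ->.
    by have := hdist_ge fa fb pq; rewrite cx cy cz.
Qed.

Lemma two_oddP x y z : two_odd x y z <->
  ((x %% 2 = 1 /\ y %% 2 = 1) \/ (x %% 2 = 1 /\ z %% 2 = 1) \/ (y %% 2 = 1 /\ z %% 2 = 1))%N.
Proof.
rewrite /two_odd !modn2; case: (odd x); case: (odd y); case: (odd z); split => //=; by intuition.
Qed.

Lemma LCD_val N D x y z w :
  two_odd x y z -> N = (x + y + z + w)%N -> D = minn (x + z) (minn (y + z) (x + y)) ->
  (forall x y z w d, two_odd x y z -> (x + y + z + w = N)%N -> (d <= x + z)%N ->
       (d <= y + z)%N -> (d <= x + y)%N -> (d <= D)%N) ->
  LCD_value N 2 D.
Proof.
move=> t -> -> ub; split; first exact: exist_code.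
move=> d [C [rC lcd md]].
have [x' [y' [z' [w' [e t' h1 h2 h3]]]]] := upper rC lcd md.
exact: ub t' e h1 h2 h3.
Qed.

Local Close Scope ring_scope.

Theorem theorem2p6 (r : nat) :
  LCD_value (6 * r + 3) 2 (4 * r + 2) /\
  LCD_value (6 * r + 4) 2 (4 * r + 2) /\
  LCD_value (6 * r + 5) 2 (4 * r + 2) /\
  LCD_value (6 * r + 6) 2 (4 * r + 3) /\
  LCD_value (6 * r + 7) 2 (4 * r + 4) /\
  LCD_value (6 * r + 8) 2 (4 * r + 5).
Proof.
split; [|split; [|split; [|split; [|split]]]].
- apply: (@LCD_val _ _ (2*r+1) (2*r+1) (2*r+1) 0);
    [by apply/two_oddP; lia | lia | lia | move=> x y z w d /two_oddP; lia].
- apply: (@LCD_val _ _ (2*r+1) (2*r+1) (2*r+1) 1);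
    [by apply/two_oddP; lia | lia | lia | move=> x y z w d /two_oddP; lia].
- apply: (@LCD_val _ _ (2*r+1) (2*r+1) (2*r+1) 2);
    [by apply/two_oddP; lia | lia | lia | move=> x y z w d /two_oddP; lia].
- apply: (@LCD_val _ _ (2*r+3) (2*r+2) (2*r+1) 0);
    [by apply/two_oddP; lia | lia | lia | move=> x y z w d /two_oddP; lia].
- apply: (@LCD_val _ _ (2*r+3) (2*r+3) (2*r+1) 0);
    [by apply/two_oddP; lia | lia | lia | move=> x y z w d /two_oddP; lia].
- apply: (@LCD_val _ _ (2*r+3) (2*r+3) (2*r+2) 0);
    [by apply/two_oddP; lia | lia | lia | move=> x y z w d /two_oddP; lia].
Qed.
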